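(* Let $p\in(0,1)$ and let $(\lambda_n)_{n\ge1}$ be a sequence with $\lambda_1=1$ and $0\le\lambda_n\le\lambda_{n-1}$ for all $n>1$. Let $r_1,r_2,\dots$ be $\{0,1\}$-valued random variables with $\Pr(r_1=1)=p$ and, for every $n\ge2$, $\Pr(r_n=1\mid r_1,\dots,r_{n-1})=\lambda_n p+(1-\lambda_n)\bar p_{n-1}$, where $\bar p_m=\frac1m\sum_{i=1}^m r_i$. Then for every $n\ge1$, \[\mathbb{E}\big[(\bar p_n-p)^2\big]=p(1-p)\Big(\frac1{n^2}+\sum_{i=1}^{n-1}\frac1{i^2}\prod_{j=i+1}^{n}\frac{(j-1)(j+1-2\lambda_j)}{j^2}\Big).\] *)

(* Defs.v *)
From HB Require Import structures.
From mathcomp Require Import all_boot all_order all_algebra.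
From mathcomp Require Import all_classical all_reals all_analysis.
Set Implicit Arguments. Unset Strict Implicit. Unset Printing Implicit Defensive.
Import Order.TTheory GRing.Theory Num.Theory.
Local Open Scope ring_scope.
Local Open Scope classical_set_scope.

Definition pbar {T : Type} {R : realType} (r : nat -> T -> R) (m : nat) (x : T) : R :=
  m%:R^-1 * \sum_(1 <= i < m.+1) r i x.

Definition history {T : Type} {R : realType} (r : nat -> T -> R) (m : nat)
  (b : nat -> bool) : set T :=
  [set x | forall i, (1 <= i <= m)%N -> r i x = (b i)%:R].

Definition bmean {R : realType} (b : nat -> bool) (m : nat) : R :=
  m%:R^-1 * \sum_(1 <= i < m.+1) ((b i)%:R : R).

(* Main.v *)
Require Import Defs.
From HB Require Import structures.
From mathcomp Require Import all_boot all_order all_algebra.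
From mathcomp Require Import all_classical all_reals all_analysis.
From mathcomp Require Import ring lra.
Import Order.TTheory GRing.Theory Num.Theory.
Local Open Scope ring_scope.
Local Open Scope classical_set_scope.
Set Implicit Arguments. Unset Strict Implicit. Unset Printing Implicit Defensive.

Section S.
Variables (d : measure_display) (T : measurableType d) (R : realType)
  (P : probability T R).

Lemma finP (A : set T) : measurable A -> P A \is a fin_num.
Proof. move=> mA; exact: fin_num_measure. Qed.

Lemma L1s (I : finType) (c : I -> R) (A : I -> set T) :
  (forall i, measurable (A i)) ->
  (\int[P]_x (\sum_i c i * \1_(A i) x)%:E = (\sum_i c i * fine (P (A i)))%:E)%E.
Proof.
move=> mA.
rewrite -sumEFin. under eq_integral do rewrite -sumEFin.
rewrite integral_sum //.
  apply: eq_bigr => i _.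
  under eq_integral do rewrite EFinM.
  rewrite integralZl //. rewrite integral_indic // setIT EFinM fineK ?finP //. exact: integrable_indic.
move=> i.
under eq_fun do rewrite EFinM.
apply: integrableZl => //. exact: integrable_indic.
Qed.


Variables (p : R) (lam : nat -> R) (r : nat -> T -> R).
Hypothesis hrmeas : forall i, (1 <= i)%N -> measurable_fun setT (r i).
Hypothesis hr01 : forall i x, (1 <= i)%N -> r i x = 0 \/ r i x = 1.

Definition ext m (b : {ffun 'I_m -> bool}) (i : nat) : bool :=
  if insub i.-1 is Some j then b j else false.
Definition pi m x : {ffun 'I_m -> bool} := [ffun j : 'I_m => r j.+1 x == 1].
Definition H m (b : {ffun 'I_m -> bool}) := history r m (ext b).

Lemma extE m (b : {ffun 'I_m -> bool}) (j : 'I_m) : ext b j.+1 = b j.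
Proof.
rewrite /ext /=; case: insubP => [k _ hk|]; last by rewrite ltn_ord.
by congr (b _); apply: val_inj.
Qed.

Lemma r01E i x : (1 <= i)%N -> r i x = (r i x == 1)%:R.
Proof. by move=> hi; case: (hr01 x hi) => ->; rewrite ?eqxx // eq_sym oner_eq0. Qed.

Lemma rpiE m x i : (1 <= i <= m)%N -> r i x = (ext (pi m x) i)%:R.
Proof.
case: i => [//|k] /= hk.
by rewrite (extE (pi m x) (Ordinal hk)) ffunE /= -r01E.
Qed.

Lemma memH m x (b : {ffun 'I_m -> bool}) : H b x <-> pi m x = b.
Proof.
split.
  move=> hx; apply/ffunP => j; rewrite ffunE.
  have := hx j.+1; rewrite extE => ->; last by rewrite /= ltn_ord.
  by case: (b j); rewrite ?eqxx // eq_sym oner_eq0.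
move=> <- i hi; exact: rpiE.
Qed.

Lemma meas_hist m c : measurable (history r m c).
Proof.
elim: m => [|m IH].
  by rewrite (_ : history r 0 c = setT) //; apply/seteqP; split => x // _ i /andP[h1 h2]; move: (leq_trans h1 h2).
rewrite (_ : history r m.+1 c = history r m c `&` (setT `&` r m.+1 @^-1` [set (c m.+1)%:R])).
  apply: measurableI => //; apply: hrmeas => //; exact: measurable_set1.
apply/seteqP; split => x.
  move=> hx; split; first by move=> i /andP[h1 h2]; apply: hx; rewrite h1 ltnW.
  by split => //; apply: hx; rewrite /= leqnn.
move=> [hx [_ hm]] i /andP[h1]; rewrite leq_eqVlt => /orP[/eqP ->//|h2].
by apply: hx; rewrite h1.
Qed.

Lemma measH m (b : {ffun 'I_m -> bool}) : measurable (H b).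
Proof. exact: meas_hist. Qed.

Lemma indic_sum m (K : {ffun 'I_m -> bool} -> R) x :
  \sum_b K b * \1_(H b) x = K (pi m x).
Proof.
rewrite (bigD1 (pi m x)) //= big1 => [|b hb].
  by rewrite indicE mem_set ?mulr1 ?addr0 //; apply/memH.
rewrite indicE memNset ?mulr0 //; move/memH => e; by rewrite e eqxx in hb.
Qed.

Lemma Lm m (K : {ffun 'I_m -> bool} -> R) :
  (\int[P]_x (K (pi m x))%:E = (\sum_b K b * fine (P (H b)))%:E)%E.
Proof.
under eq_integral do rewrite -indic_sum.
by rewrite L1s //; exact: measH.
Qed.


Hypothesis hlam1 : lam 1%N = 1.
Hypothesis hr1 : P [set x | r 1%N x = 1] = p%:E.
Hypothesis hcond : forall (n : nat) (b : nat -> bool), (2 <= n)%N ->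
     P (history r n.-1 b `&` [set x | r n x = 1]) =
     ((lam n * p + (1 - lam n) * bmean b n.-1)%:E * P (history r n.-1 b))%E.

Definition q n (b : {ffun 'I_n.-1 -> bool}) : R :=
  lam n * p + (1 - lam n) * bmean (ext b) n.-1.

Lemma hist0 c : history r 0 c = setT.
Proof. by apply/seteqP; split => x // _ i /andP[h1 h2]; move: (leq_trans h1 h2). Qed.

Lemma hcond' n (b : {ffun 'I_n.-1 -> bool}) : (1 <= n)%N ->
  fine (P (H b `&` [set x | r n x = 1])) = q b * fine (P (H b)).
Proof.
case: n b => [//|[|n]] b _.
  rewrite /q /H /= hist0 setTI hr1 probability_setT hlam1 /=.
  by rewrite subrr mul0r addr0 mul1r mulr1.
rewrite /H hcond // -(fineK (finP (measH b))) -EFinM /=.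
by [].
Qed.

Lemma Ln n (F G : {ffun 'I_n.-1 -> bool} -> R) : (1 <= n)%N ->
  (\int[P]_x (F (pi n.-1 x) + G (pi n.-1 x) * r n x)%:E =
   (\sum_b (F b + G b * q b) * fine (P (H b)))%:E)%E.
Proof.
move=> hn.
pose c (tb : bool * {ffun 'I_n.-1 -> bool}) := if tb.1 then G tb.2 else F tb.2.
pose A (tb : bool * {ffun 'I_n.-1 -> bool}) :=
  if tb.1 then H tb.2 `&` [set x | r n x = 1] else H tb.2.
have E x : F (pi n.-1 x) + G (pi n.-1 x) * r n x = \sum_tb c tb * \1_(A tb) x.
  rewrite -(pair_big xpredT xpredT (fun t b => c (t, b) * \1_(A (t, b)) x)) /=.
  rewrite big_bool /= /c /A /=.
  under eq_bigr do rewrite indicI /= mulrA.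
  rewrite -big_distrl /= !indic_sum addrC; congr (_ + _ * _).
  rewrite indicE; case: (hr01 x hn) => e; rewrite e; last by rewrite mem_set.
  by rewrite memNset //= e => /eqP; rewrite eq_sym oner_eq0.
under eq_integral do rewrite E.
rewrite L1s; last first.
  have mR : measurable [set x | r n x = 1].
    by have := hrmeas hn measurableT (measurable_set1 1); rewrite setTI.
  by case=> [[]] b /=; rewrite /A /=; [apply: measurableI; [exact: measH | exact: mR] | exact: measH].
rewrite -(pair_big xpredT xpredT (fun t b => c (t, b) * fine (P (A (t, b))))) /=.
rewrite big_bool /= /c /A /= -big_split /=; congr (_%:E); apply: eq_bigr => b _.
by rewrite (hcond' b hn); ring.
Qed.


Definition dd m (b : {ffun 'I_m -> bool}) : R := bmean (ext b) m - p.

Lemma sum_pi m x : \sum_(1 <= i < m.+1) r i x = \sum_(1 <= i < m.+1) ((ext (pi m x) i)%:R : R).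
Proof. by apply: eq_big_nat => i hi; rewrite (rpiE x hi). Qed.

Lemma sum_mean m x : \sum_(1 <= i < m.+1) r i x = m%:R * pbar r m x.
Proof.
case: m => [|m]; first by rewrite big_geq // mul0r.
by rewrite /pbar mulrA mulfV ?mul1r // pnatr_eq0.
Qed.

Lemma pbar_dd m x : pbar r m x - p = dd (pi m x).
Proof. by rewrite /dd /pbar /bmean sum_pi. Qed.

Lemma pbarS m x : pbar r m.+1 x = (m.+1%:R)^-1 * (m%:R * (dd (pi m x) + p) + r m.+1 x).
Proof.
rewrite -pbar_dd subrK -sum_mean /pbar big_nat_recr //.
Qed.


Lemma mean_rec m :
  (\int[P]_x (pbar r m.+1 x - p)%:E =
  ((m.+1%:R)^-1 * ((m.+1%:R - lam m.+1) *
     \sum_(b : {ffun 'I_m -> bool}) dd b * fine (P (H b))))%:E)%E.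
Proof.
pose F := fun b : {ffun 'I_m -> bool} => (m.+1%:R)^-1 * (m%:R * (dd b + p)) - p.
pose G := fun b : {ffun 'I_m -> bool} => ((m.+1%:R)^-1 : R).
have hm : (m.+1%:R : R) != 0 by rewrite pnatr_eq0.
transitivity (\int[P]_x (F (pi m.+1.-1 x) + G (pi m.+1.-1 x) * r m.+1 x)%:E)%E.
  apply: eq_integral => x _; congr (_%:E); rewrite pbarS /F /G /=; field; by rewrite addrC natr1.
apply: eq_trans (@Ln m.+1 F G _) _ => //; congr (_%:E).
rewrite big_distrr /= big_distrr /=; apply: eq_bigr => b _.
rewrite /F /G /q /dd /=. rewrite -!natr1. field. by rewrite natr1.
Qed.

Lemma Lone m : \sum_(b : {ffun 'I_m -> bool}) fine (P (H b)) = 1.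
Proof.
have := Lm (fun _ : {ffun 'I_m -> bool} => 1).
rewrite (_ : (fun x => (1:R)%:E) = cst 1%E) // integral_cst // mul1e.
rewrite [X in X = _ -> _](_ : _ = 1%E); last exact: probability_setT.
by move=> [] ->; apply: eq_bigr => b _; rewrite mul1r.
Qed.

Lemma mean0 m : (\int[P]_x (pbar r m.+1 x - p)%:E = 0)%E.
Proof.
elim: m => [|m IH].
  by rewrite mean_rec hlam1 subrr mul0r mulr0.
rewrite mean_rec.
have := Lm (@dd m.+1).
under eq_integral do rewrite -pbar_dd.
by rewrite IH => -[] <-; rewrite !mulr0.
Qed.


Lemma var_rec m :
  (\int[P]_x ((pbar r m.+1 x - p) ^+ 2)%:E =
  ((m.+1%:R ^+ 2)^-1 * (m%:R * (m.+2%:R - 2 * lam m.+1) *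
       \sum_(b : {ffun 'I_m -> bool}) (dd b ^+ 2 * fine (P (H b)))
     + (1 - 2 * p) * (1 - lam m.+1) * \sum_(b : {ffun 'I_m -> bool}) (dd b * fine (P (H b)))
     + p * (1 - p) * \sum_(b : {ffun 'I_m -> bool}) fine (P (H b))))%:E)%E.
Proof.
pose F := fun b : {ffun 'I_m -> bool} => (m.+1%:R ^+ 2)^-1 * (m%:R * dd b - p) ^+ 2.
pose G := fun b : {ffun 'I_m -> bool} => (m.+1%:R ^+ 2)^-1 * (2 * (m%:R * dd b - p) + 1).
have hm : (m.+1%:R : R) != 0 by rewrite pnatr_eq0.
transitivity (\int[P]_x (F (pi m.+1.-1 x) + G (pi m.+1.-1 x) * r m.+1 x)%:E)%E.
  apply: eq_integral => x _; congr (_%:E); rewrite pbarS /F /G /=.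
  case: (hr01 x (isT : (0 < m.+1)%N)) => ->; rewrite -!natr1; field; first [by rewrite natr1 pnatr_eq0 | by rewrite addrC natr1 pnatr_eq0].
apply: eq_trans (@Ln m.+1 F G _) _ => //; congr (_%:E).
rewrite !big_distrr /= -!big_split /= big_distrr /=; apply: eq_bigr => b _.
rewrite /F /G /q /dd /= -!natr1. field; first [by rewrite natr1 pnatr_eq0 | by rewrite addrC natr1 pnatr_eq0].
Qed.


Definition cc j : R := (j.-1)%:R * (j.+1%:R - 2 * lam j) / (j%:R ^+ 2).
Definition Cn n : R := (n%:R ^+ 2)^-1 +
  \sum_(1 <= i < n) ((i%:R ^+ 2)^-1 * \prod_(i.+1 <= j < n.+1) cc j).

Lemma Crec n : (1 <= n)%N -> Cn n.+1 = (n.+1%:R ^+ 2)^-1 + cc n.+1 * Cn n.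
Proof.
move=> hn; rewrite /Cn; congr (_ + _).
transitivity ((\sum_(1 <= i < n.+1) ((i%:R ^+ 2)^-1 * \prod_(i.+1 <= j < n.+1) cc j)) * cc n.+1).
  rewrite big_distrl /=; apply: eq_big_nat => i /andP[_ hi].
  by rewrite [in LHS]big_nat_recr //= mulrA.
by rewrite big_nat_recr //= [\prod_(_ <= _ < _) _]big_geq // mulr1 mulrC addrC.
Qed.

Lemma var_main m :
  (\int[P]_x ((pbar r m.+1 x - p) ^+ 2)%:E = (p * (1 - p) * Cn m.+1)%:E)%E.
Proof.
elim: m => [|m IH].
  rewrite var_rec hlam1 Lone /Cn big_geq //; congr (_%:E).
  by rewrite subrr; field.
apply: eq_trans (var_rec m.+1) _; rewrite Lone Crec //.
have h2 := Lm (fun b : {ffun 'I_m.+1 -> bool} => dd b ^+ 2).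
have e2 : (\int[P]_x ((dd (pi m.+1 x)) ^+ 2)%:E = \int[P]_x ((pbar r m.+1 x - p) ^+ 2)%:E)%E.
  by apply: eq_integral => x _; rewrite pbar_dd.
rewrite /= e2 IH in h2; case: h2 => <-.
have h1 := Lm (@dd m.+1).
have e1 : (\int[P]_x (dd (pi m.+1 x))%:E = \int[P]_x (pbar r m.+1 x - p)%:E)%E.
  by apply: eq_integral => x _; rewrite pbar_dd.
rewrite /= e1 mean0 in h1; case: h1 => <-.
congr (_%:E); rewrite /cc /=; field.
by apply: lt0r_neq0; have := ler0n R m; lra.
Qed.

End S.

Unset Implicit Arguments. Set Strict Implicit.

Theorem theoremA4 (d : measure_display) (T : measurableType d) (R : realType)
  (P : probability T R) (p : R) (lam : nat -> R) (r : nat -> T -> R)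
  (hp : 0 < p < 1)
  (hlam1 : lam 1%N = 1)
  (hlam : forall n, (1 < n)%N -> 0 <= lam n <= lam n.-1)
  (hrmeas : forall i, (1 <= i)%N -> measurable_fun setT (r i))
  (hr01 : forall i x, (1 <= i)%N -> r i x = 0 \/ r i x = 1)
  (hr1 : P [set x | r 1%N x = 1] = p%:E)
  (hcond : forall (n : nat) (b : nat -> bool), (2 <= n)%N ->
     P (history r n.-1 b `&` [set x | r n x = 1]) =
     ((lam n * p + (1 - lam n) * bmean b n.-1)%:E * P (history r n.-1 b))%E)
  (n : nat) (hn : (1 <= n)%N) :
  (\int[P]_x ((pbar r n x - p) ^+ 2)%:E)%E =
  (p * (1 - p) * ((n%:R ^+ 2)^-1 +
     \sum_(1 <= i < n) ((i%:R ^+ 2)^-1 *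
        \prod_(i.+1 <= j < n.+1)
          ((j.-1)%:R * (j.+1%:R - 2 * lam j) / (j%:R ^+ 2)))))%:E.
Proof.
case: n hn => [//|m] _.
exact: (var_main hrmeas hr01 hlam1 hr1 hcond m).
Qed.
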